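(* Fix $t>0$ and $\alpha\ge 0$. For every $\phi\in C([0,t];\mathbb{R})$: (1) $\mathcal{T}(T_\alpha(\phi))(s)=\mathbb{T}_{\log\{e^{2\phi_t}/(1+\alpha A_t(\phi))\}}(\phi)(s)$ for $0\le s\le t$; (2) $T_\alpha(\mathcal{T}(\phi))(s)=\mathbb{T}_{\log\{e^{2\phi_t}+\alpha A_t(\phi)\}}(\phi)(s)$ for $0\le s\le t$.
   Context: For $\phi\in C([0,t];\mathbb{R})$ let $A_s(\phi)=\int_0^s e^{2\phi_u}\,du$. For $z\in\mathbb{R}$, $\mathbb{T}_z(\phi)(s)=\phi_s-\log\{1+\frac{A_s(\phi)}{A_t(\phi)}(e^z-1)\}$, $0\le s\le t$; $\mathcal{T}(\phi)(s)=\mathbb{T}_{2\phi_t}(\phi)(s)$; and $T_\alpha(\phi)(s)=\phi_s-\log\{1+\alpha A_s(\phi)\}$, $0\le s\le t$. *)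

(* Defs.v *)
From Stdlib Require Import Reals.
From Coquelicot Require Import Coquelicot.
Open Scope R_scope.

Definition cont_on_0t (t : R) (phi : R -> R) : Prop :=
  forall u, 0 <= u <= t ->
    filterlim phi (within (fun v => 0 <= v <= t) (locally u)) (locally (phi u)).

Definition A (phi : R -> R) (s : R) : R := RInt (fun u => exp (2 * phi u)) 0 s.

Definition bbT (t z : R) (phi : R -> R) (s : R) : R :=
  phi s - ln (1 + A phi s / A phi t * (exp z - 1)).

Definition calT (t : R) (phi : R -> R) : R -> R := bbT t (2 * phi t) phi.

Definition Talpha (alpha : R) (phi : R -> R) (s : R) : R :=
  phi s - ln (1 + alpha * A phi s).

(* Main.v *)
Require Import Defs.
From Stdlib Require Import Reals Lra.
From Coquelicot Require Import Coquelicot.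
Open Scope R_scope.

Definition clamp (t u : R) : R := Rmax 0 (Rmin u t).

Lemma clamp_in t u : 0 <= t -> 0 <= clamp t u <= t.
Proof. intros; unfold clamp, Rmax, Rmin; repeat destruct Rle_dec; lra. Qed.

Lemma clamp_id t u : 0 <= u <= t -> clamp t u = u.
Proof. intros; unfold clamp, Rmax, Rmin; repeat destruct Rle_dec; lra. Qed.

Lemma clamp_lip t x y : 0 <= t -> Rabs (clamp t y - clamp t x) <= Rabs (y - x).
Proof.
  intros; unfold clamp, Rmax, Rmin; repeat destruct Rle_dec;
  unfold Rabs; repeat destruct Rcase_abs; lra.
Qed.

Lemma phic_cont t phi : 0 <= t -> cont_on_0t t phi ->
  forall x, continuous (fun u => phi (clamp t u)) x.
Proof.
  intros Ht Hc x. unfold continuous.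
  apply filterlim_comp with (G := within (fun v => 0 <= v <= t) (locally (clamp t x))).
  - intros P HP. unfold within in HP. destruct HP as [eps He].
    exists eps. intros y Hy. apply He.
    + change (Rabs (clamp t y - clamp t x) < eps).
      change (Rabs (y - x) < eps) in Hy.
      pose proof (clamp_lip t x y Ht). lra.
    + apply clamp_in; auto.
  - apply Hc. apply clamp_in; auto.
Qed.

Lemma exp_cont2 (f : R -> R) x : continuous f x -> continuous (fun u => exp (2 * f u)) x.
Proof.
  intros Hf.
  assert (H1 : continuous (fun u => 2 * f u) x).
  { exact (@continuous_mult R_UniformSpace R_AbsRing (fun _ => 2) f x (continuous_const _ _) Hf). }
  assert (H2 : continuous exp (2 * f x)).
  { apply (@ex_derive_continuous R_AbsRing R_NormedModule). auto_derive. auto. }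
  exact (continuous_comp _ _ _ H1 H2).
Qed.

Lemma Ac_derive (pc : R -> R) : (forall x, continuous pc x) ->
  forall x, is_derive (A pc) x (exp (2 * pc x)).
Proof.
  intros Hc x. unfold A.
  apply (is_derive_RInt (fun u => exp (2 * pc u)) (fun b => RInt (fun u => exp (2 * pc u)) 0 b) 0 x).
  - apply filter_forall. intros b. apply (@RInt_correct R_CompleteNormedModule).
    apply (@ex_RInt_continuous R_CompleteNormedModule). intros; apply exp_cont2; auto.
  - apply exp_cont2; auto.
Qed.

Lemma A_clamp t phi : forall u, 0 <= u <= t -> A phi u = A (fun v => phi (clamp t v)) u.
Proof.
  intros u Hu. unfold A. apply RInt_ext. intros x Hx.
  rewrite Rmin_left in Hx by lra. rewrite Rmax_right in Hx by lra.
  rewrite clamp_id; auto; lra.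
Qed.

Lemma A_bounds t phi : 0 < t -> cont_on_0t t phi ->
  0 < A phi t /\ forall s, 0 <= s <= t -> 0 <= A phi s <= A phi t.
Proof.
  intros Ht Hc.
  pose proof (phic_cont t phi (Rlt_le _ _ Ht) Hc) as Hpc.
  set (pc := fun v => phi (clamp t v)) in *.
  assert (Hex : forall a b, ex_RInt (fun u => exp (2 * pc u)) a b).
  { intros; apply (@ex_RInt_continuous R_CompleteNormedModule); intros; apply exp_cont2; auto. }
  split.
  - rewrite (A_clamp t phi t) by lra. unfold A.
    apply RInt_gt_0; auto. intros; apply exp_pos.
    intros; apply exp_cont2; auto.
  - intros s Hs. rewrite (A_clamp t phi t) by lra. rewrite (A_clamp t phi s) by lra.
    fold pc. unfold A. split.
    + apply RInt_ge_0; auto. lra. intros; left; apply exp_pos.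
    + rewrite <- (RInt_Chasles _ 0 s t) by auto.
      assert (0 <= RInt (fun u => exp (2 * pc u)) s t).
      { apply RInt_ge_0; auto. lra. intros; left; apply exp_pos. }
      change (plus ?a ?b) with (a + b). lra.
Qed.

Lemma exp2_ln p y : 0 < y -> exp (2 * (p - ln y)) = exp (2 * p) / (y ^ 2).
Proof.
  intros Hy. replace (2 * (p - ln y)) with (2 * p + - (ln y + ln y)) by ring.
  rewrite exp_plus, exp_Ropp, exp_plus, exp_ln by auto. field. lra.
Qed.

Lemma key t phi c psi : 0 < t -> cont_on_0t t phi ->
  (forall u, 0 <= u <= t -> 0 < 1 + c * A phi u) ->
  (forall u, 0 <= u <= t -> psi u = phi u - ln (1 + c * A phi u)) ->
  forall s, 0 <= s <= t -> A psi s = A phi s / (1 + c * A phi s).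
Proof.
  intros Ht Hc Hp Hpsi s Hs.
  pose proof (phic_cont t phi (Rlt_le _ _ Ht) Hc) as Hpc.
  pose proof (A_clamp t phi) as HA.
  set (pc := fun v => phi (clamp t v)) in *.
  pose proof (Ac_derive pc Hpc) as HD.
  set (Ac := A pc) in *.
  set (g := fun s => Ac s / (1 + c * Ac s)).
  set (df := fun u => exp (2 * pc u) * / (1 + c * Ac u) ^ 2).
  assert (Hint : is_RInt df 0 s (minus (g s) (g 0))).
  { apply (@is_RInt_derive R_CompleteNormedModule).
    - intros x Hx. rewrite Rmin_left in Hx by lra. rewrite Rmax_right in Hx by lra.
      assert (Hx' : 0 < 1 + c * Ac x) by (unfold Ac; rewrite <- HA by lra; apply Hp; lra).
      unfold g, df. auto_derive.
      + assert (Hd : ex_derive (fun x => Ac x) x) by (exists (exp (2 * pc x)); apply HD).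
        repeat split; auto. lra.
      + replace (Derive (fun x => Ac x) x) with (exp (2 * pc x))
          by (symmetry; apply is_derive_unique; apply HD).
        field. lra.
    - intros x Hx. rewrite Rmin_left in Hx by lra. rewrite Rmax_right in Hx by lra.
      assert (Hx' : 0 < 1 + c * Ac x) by (unfold Ac; rewrite <- HA by lra; apply Hp; lra).
      unfold df.
      apply (@continuous_mult R_UniformSpace R_AbsRing).
      + apply exp_cont2; auto.
      + apply (@ex_derive_continuous R_AbsRing R_NormedModule). auto_derive.
        assert (Hd : ex_derive (fun x => Ac x) x) by (exists (exp (2 * pc x)); apply HD).
        repeat split; auto. nra. }
  apply (@is_RInt_unique R_CompleteNormedModule) in Hint.
  assert (Hg0 : g 0 = 0).
  { unfold g, Ac, A. rewrite RInt_point. change (zero : R) with 0. unfold Rdiv. ring. }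
  rewrite Hg0 in Hint. change (minus (g s) 0) with (g s - 0) in Hint.
  rewrite HA by lra. fold Ac.
  replace (Ac s / (1 + c * Ac s)) with (g s) by reflexivity.
  rewrite <- (Rminus_0_r (g s)), <- Hint.
  unfold A. apply RInt_ext. intros x Hx.
  rewrite Rmin_left in Hx by lra. rewrite Rmax_right in Hx by lra.
  rewrite Hpsi by lra. rewrite exp2_ln by (apply Hp; lra).
  unfold df. fold (A phi x). rewrite HA by lra. unfold pc. rewrite clamp_id by lra. reflexivity.
Qed.

Lemma pos_interp r w : 0 <= r <= 1 -> 0 < w -> 0 < 1 + r * (w - 1).
Proof.
  intros Hr Hw. destruct (Rle_lt_or_eq_dec r 1 (proj2 Hr)).
  - nra.
  - subst; lra.
Qed.

Lemma ratio_bounds x a : 0 < a -> 0 <= x <= a -> 0 <= x / a <= 1.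
Proof.
  intros Ha Hx. split.
  - apply Rdiv_le_0_compat; lra.
  - apply (Rmult_le_reg_r a); auto. unfold Rdiv. rewrite Rmult_assoc, Rinv_l by lra. lra.
Qed.

Theorem lemma4p1 (t alpha : R) (phi : R -> R) :
  0 < t -> 0 <= alpha -> cont_on_0t t phi ->
  forall s, 0 <= s <= t ->
    calT t (Talpha alpha phi) s
      = bbT t (ln (exp (2 * phi t) / (1 + alpha * A phi t))) phi s
    /\ Talpha alpha (calT t phi) s
      = bbT t (ln (exp (2 * phi t) + alpha * A phi t)) phi s.
Proof.
  intros Ht Hal Hc s Hs.
  destruct (A_bounds t phi Ht Hc) as [Hapos Hb].
  pose proof (exp_pos (2 * phi t)) as HE.
  assert (Hrs := ratio_bounds (A phi s) (A phi t) Hapos (Hb s Hs)).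
  split.
  - assert (HX : forall u, 0 <= u <= t -> 0 < 1 + alpha * A phi u)
      by (intros u Hu; specialize (Hb u Hu); nra).
    assert (HK := key t phi alpha (Talpha alpha phi) Ht Hc HX (fun u _ => eq_refl)).
    unfold calT, bbT. rewrite !HK by lra.
    unfold Talpha at 1 2. rewrite exp2_ln by (apply HX; lra).
    rewrite exp_ln by (apply Rdiv_lt_0_compat; auto; apply HX; lra).
    set (As := A phi s) in *. set (a := A phi t) in *. set (Et := exp (2 * phi t)) in *.
    assert (HXs : 0 < 1 + alpha * As) by (apply HX; lra).
    assert (HXt : 0 < 1 + alpha * a) by (apply HX; lra).
    assert (HZ : 0 < 1 + As / a * (Et / (1 + alpha * a) - 1)).
    { apply pos_interp; auto. apply Rdiv_lt_0_compat; auto. }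
    replace (1 + As / (1 + alpha * As) / (a / (1 + alpha * a)) *
               (Et / (1 + alpha * a) ^ 2 - 1))
      with ((1 + As / a * (Et / (1 + alpha * a) - 1)) / (1 + alpha * As))
      by (field; lra).
    rewrite ln_div by auto. ring.
  - set (Et := exp (2 * phi t)) in *. set (a := A phi t) in *.
    set (c := (Et - 1) / a).
    assert (HX : forall u, 0 <= u <= t -> 0 < 1 + c * A phi u).
    { intros u Hu. replace (1 + c * A phi u) with (1 + A phi u / a * (Et - 1))
        by (unfold c; field; lra).
      apply pos_interp; auto. apply ratio_bounds; auto. }
    assert (HK := key t phi c (calT t phi) Ht Hc HX).
    unfold Talpha. rewrite HK; auto.
    2:{ intros u Hu. unfold calT, bbT. fold a Et.
        replace (A phi u / a * (Et - 1)) with (c * A phi u) by (unfold c; field; lra).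
        reflexivity. }
    unfold calT, bbT. fold a Et.
    rewrite exp_ln by nra.
    set (As := A phi s) in *.
    assert (HXs : 0 < 1 + c * As) by (apply HX; lra).
    assert (HY : 0 < 1 + As / a * (Et - 1)) by (apply pos_interp; auto).
    assert (HW : 0 < 1 + alpha * (As / (1 + c * As))).
    { assert (0 <= As / (1 + c * As)) by (apply Rdiv_le_0_compat; [pose proof (Hb s Hs) as Hbs; change (A phi s) with As in Hbs; lra | lra]). nra. }
    replace (1 + As / a * (Et + alpha * a - 1))
      with ((1 + As / a * (Et - 1)) * (1 + alpha * (As / (1 + c * As)))).
    2:{ assert (Hq : a * (1 + c * As) = a + (Et - 1) * As) by (unfold c; field; lra). assert (0 < a * (1 + c * As)) by (apply Rmult_lt_0_compat; lra). unfold c in *. field. split; lra. }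
    rewrite ln_mult by auto. ring.
Qed.
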